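(* Let $\boldsymbol{\Psi}_{\mathrm{id}}=\mathrm{diag}(\psi_{\mathrm{id},1},\dots,\psi_{\mathrm{id},N})$ with all $\psi_{\mathrm{id},i}>0$, $\boldsymbol{\Psi}_{\mathrm{f}}=\mathrm{diag}(\psi_{\mathrm{f},1},\dots,\psi_{\mathrm{f},K})$ with all $\psi_{\mathrm{f},k}>0$, and $\mathbf{W}=[\mathbf{w}_1\ \cdots\ \mathbf{w}_K]\in\mathbb{R}^{N\times K}$ with linearly independent columns. For scalars $\alpha,\beta\in(0,1]$ let $\mathbf{G}=\left(\alpha\boldsymbol{\Psi}_{\mathrm{id}}+\beta\mathbf{W}\boldsymbol{\Psi}_{\mathrm{f}}\mathbf{W}^\top\right)^{-1}$ and, for $\mathbf{v}\in\mathbb{R}^N$, $\bar{\mathcal{C}}(\mathbf{v})=\tfrac12\mathbf{v}^\top\mathbf{G}\mathbf{v}$ (which depends on $\alpha,\beta$). Then: (i) $\displaystyle\lim_{\alpha\to1,\beta\to0}\bar{\mathcal{C}}(\mathbf{v})=\tfrac12\mathbf{v}^\top\boldsymbol{\Psi}_{\mathrm{id}}^{-1}\mathbf{v}=\tfrac12\sum_{i=1}^N\frac{v_i^2}{\psi_{\mathrm{id},i}}$; (ii) $\displaystyle\lim_{\alpha\to0,\beta\to1}\bar{\mathcal{C}}(\mathbf{v})=\infty$ if $\mathbf{v}\notin\mathrm{span}(\mathbf{w}_1,\dots,\mathbf{w}_K)$, and $\displaystyle\lim_{\alpha\to0,\beta\to1}\bar{\mathcal{C}}(\mathbf{v})=\tfrac12\mathbf{u}^\top\boldsymbol{\Psi}_{\mathrm{f}}^{-1}\mathbf{u}$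 if $\mathbf{v}=\mathbf{W}\mathbf{u}$ with $\mathbf{u}\in\mathbb{R}^K$.
   Context: $\bar{\mathcal{C}}(\mathbf{v})$ is the one-period expected implementation shortfall of executing $\mathbf{v}$ shares under linear price impact with coefficient matrix $\mathbf{G}$. *)

(* Defs.v *)
From HB Require Import structures.
From mathcomp Require Import all_boot all_order all_algebra.
From mathcomp Require Import all_classical all_reals all_analysis.
Set Implicit Arguments. Unset Strict Implicit. Unset Printing Implicit Defensive.
Import Order.TTheory GRing.Theory Num.Theory numFieldNormedType.Exports.
Local Open Scope ring_scope.

Definition impactG (R : realType) (N K : nat) (psi_id : 'rV[R]_N)
  (psi_f : 'rV[R]_K) (W : 'M[R]_(N, K)) (alpha beta : R) : 'M[R]_N :=
  invmx (alpha *: diag_mx psi_id + beta *: (W *m diag_mx psi_f *m W^T)).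

Definition Cbar (R : realType) (N K : nat) (psi_id : 'rV[R]_N)
  (psi_f : 'rV[R]_K) (W : 'M[R]_(N, K)) (alpha beta : R) (v : 'cV[R]_N) : R :=
  2^-1 * (v^T *m impactG psi_id psi_f W alpha beta *m v) 0 0.

Definition param_dom (R : realType) : set (R * R) :=
  fun p => (0 < p.1 <= 1) /\ (0 < p.2 <= 1).

(* Main.v *)
Require Import Defs.
From HB Require Import structures.
From mathcomp Require Import all_boot all_order all_algebra.
From mathcomp Require Import all_classical all_reals all_analysis.
From mathcomp Require Import ring lra.
Import Order.TTheory GRing.Theory Num.Theory numFieldNormedType.Exports.
Local Open Scope ring_scope.
Local Open Scope classical_set_scope.




Lemma tr11 {R : realType} (n : nat) (x y : 'cV[R]_n) : (y^T *m x) 0 0 = (x^T *m y) 0 0.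
Proof.
have -> : (y^T *m x) 0 0 = ((y^T *m x)^T) 0 0 by rewrite [RHS]mxE.
by rewrite trmx_mul trmxK.
Qed.

Lemma qf_eq {R : realType} n (M : 'M[R]_n) (v : 'cV_n) : M \in unitmx ->
  let x0 := invmx M *m v in
  (v^T *m invmx M *m v) 0 0 = 2 * (x0^T *m v) 0 0 - (x0^T *m M *m x0) 0 0.
Proof.
move=> uM x0.
have Mx0 : M *m x0 = v by rewrite /x0 mulmxA mulmxV // mul1mx.
rewrite -[x0^T *m M *m x0]mulmxA Mx0 tr11 /x0 mulmxA.
by rewrite mulr2n mulrDl mul1r addrK.
Qed.

Lemma qf_lower {R : realType} n (M : 'M[R]_n) (v x : 'cV_n) :
  M^T = M -> (forall z : 'cV_n, 0 <= (z^T *m M *m z) 0 0) -> M \in unitmx ->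
  2 * (x^T *m v) 0 0 - (x^T *m M *m x) 0 0 <= (v^T *m invmx M *m v) 0 0.
Proof.
move=> sM psd uM.
set x0 := invmx M *m v.
have Mx0 : M *m x0 = v by rewrite /x0 mulmxA mulmxV // mul1mx.
have x0M : x0^T *m M = v^T by rewrite -sM -trmx_mul Mx0.
have := psd (x - x0).
have -> : (x - x0)^T = x^T - x0^T by rewrite linearB.
rewrite mulmxBl x0M !(mulmxBl, mulmxBr) -[x^T *m M *m x0]mulmxA Mx0.
have e : forall (A B : 'M[R]_1), (A - B) 0 0 = A 0 0 - B 0 0 by move=> A B; rewrite !mxE.
rewrite !e tr11.
have -> : (v^T *m x0) 0 0 = (v^T *m invmx M *m v) 0 0 by rewrite mulmxA.
move=> h. rewrite mulr2n mulrDl mul1r. lra.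
Qed.

Lemma diag_quad {R : realType} n (d : 'rV[R]_n) (x y : 'cV_n) :
  (x^T *m diag_mx d *m y) 0 0 = \sum_i x i 0 * d 0 i * y i 0.
Proof.
rewrite mul_mx_diag !mxE; apply: eq_bigr => i _; by rewrite !mxE.
Qed.

Lemma sq_bound {R : realType} n (d : 'rV[R]_n) (y v : 'cV_n) (a : R) :
  (forall i, 0 < d 0 i) -> 0 < a ->
  2 * (y^T *m v) 0 0 - a * (y^T *m diag_mx d *m y) 0 0
    <= a^-1 * \sum_i v i 0 ^+ 2 / d 0 i.
Proof.
move=> dp ap; rewrite diag_quad mxE !mulr_sumr.
rewrite -sumrB; apply: ler_sum => i _; rewrite !mxE.
have di := dp i.
have key : a^-1 * (v i 0 ^+ 2 / d 0 i) - (2 * (y i 0 * v i 0) - a * (y i 0 * d 0 i * y i 0))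
   = (a * d 0 i * y i 0 - v i 0) ^+ 2 / (a * d 0 i).
  by field; rewrite !gt_eqF.
rewrite -subr_ge0 key; apply: divr_ge0; first exact: sqr_ge0.
exact: mulr_ge0 (ltW ap) (ltW di).
Qed.

Lemma diag_ge0 {R : realType} n (d : 'rV[R]_n) (x : 'cV_n) : (forall i, 0 < d 0 i) ->
  0 <= (x^T *m diag_mx d *m x) 0 0.
Proof.
move=> dp; rewrite diag_quad; apply: sumr_ge0 => i _.
by rewrite mulrAC -expr2 mulr_ge0 ?sqr_ge0 ?ltW.
Qed.

Lemma diag_eq0 {R : realType} n (d : 'rV[R]_n) (x : 'cV_n) : (forall i, 0 < d 0 i) ->
  (x^T *m diag_mx d *m x) 0 0 = 0 -> x = 0.
Proof.
move=> dp; rewrite diag_quad => h.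
apply/matrixP => i j; rewrite (ord1 j) mxE.
have nn : forall k : 'I_n, xpredT k -> 0 <= x k 0 * d 0 k * x k 0.
  by move=> k _; rewrite mulrAC -expr2 mulr_ge0 ?sqr_ge0 ?ltW.
have := @psumr_eq0P R _ xpredT (fun i => x i 0 * d 0 i * x i 0) nn h i isT.
move=> /eqP; rewrite mulrAC -expr2 mulf_eq0 sqrf_eq0 (gt_eqF (dp i)) orbF.
by move/eqP.
Qed.

Definition Mab {R : realType} {N K : nat} (d1 : 'rV[R]_N) (d2 : 'rV[R]_K) (W : 'M[R]_(N, K)) (a b : R) : 'M[R]_N :=
  a *: diag_mx d1 + b *: (W *m diag_mx d2 *m W^T).

Lemma e_add {R : realType} (A B : 'M[R]_1) : (A + B) 0 0 = A 0 0 + B 0 0.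
Proof. by rewrite mxE. Qed.
Lemma e_scale {R : realType} (c : R) (A : 'M[R]_1) : (c *: A) 0 0 = c * A 0 0.
Proof. by rewrite mxE. Qed.

Lemma M_quad {R : realType} N K (d1 : 'rV[R]_N) (d2 : 'rV[R]_K) W a b (x : 'cV_N) :
  (x^T *m Mab d1 d2 W a b *m x) 0 0 = a * (x^T *m diag_mx d1 *m x) 0 0
     + b * ((W^T *m x)^T *m diag_mx d2 *m (W^T *m x)) 0 0.
Proof.
rewrite /Mab mulmxDr mulmxDl -!scalemxAr -!scalemxAl e_add !e_scale.
by rewrite trmx_mul trmxK !mulmxA.
Qed.

Lemma M_sym {R : realType} N K (d1 : 'rV[R]_N) (d2 : 'rV[R]_K) W a b :
  (Mab d1 d2 W a b)^T = Mab d1 d2 W a b.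
Proof.
by rewrite /Mab linearD !linearZ /= tr_diag_mx !trmx_mul trmxK tr_diag_mx mulmxA.
Qed.

Lemma M_psd {R : realType} N K (d1 : 'rV[R]_N) (d2 : 'rV[R]_K) W a b :
  (forall i, 0 < d1 0 i) -> (forall k, 0 < d2 0 k) -> 0 <= a -> 0 <= b ->
  forall z : 'cV_N, 0 <= (z^T *m Mab d1 d2 W a b *m z) 0 0.
Proof.
move=> p1 p2 a0 b0 z; rewrite M_quad.
by rewrite addr_ge0 // mulr_ge0 // diag_ge0.
Qed.

Lemma M_unit {R : realType} N K (d1 : 'rV[R]_N) (d2 : 'rV[R]_K) W a b :
  (forall i, 0 < d1 0 i) -> (forall k, 0 < d2 0 k) -> 0 < a -> 0 <= b ->
  Mab d1 d2 W a b \in unitmx.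
Proof.
move=> p1 p2 a0 b0.
rewrite -row_free_unit -kermx_eq0; apply/eqP/row_matrixP => i; rewrite row0.
set z := row i _.
have zM : z *m Mab d1 d2 W a b = 0 by rewrite /z -row_mul mulmx_ker row0.
have : (z^T^T *m Mab d1 d2 W a b *m z^T) 0 0 = 0 by rewrite trmxK zM mul0mx mxE.
rewrite M_quad => h.
have h1 := @diag_ge0 R _ _ z^T p1; have h2 := @diag_ge0 R _ _ (W^T *m z^T) p2.
move/eqP: h; rewrite paddr_eq0 ?mulr_ge0 ?(ltW a0) // => /andP[hX _].
move: hX; rewrite mulf_eq0 (gt_eqF a0) /= => /eqP /diag_eq0 -/(_ p1).
by move/(congr1 trmx); rewrite trmxK trmx0.
Qed.

Definition cs {R : realType} {n : nat} (d : 'rV[R]_n) (v : 'cV[R]_n) := \sum_i v i 0 ^+ 2 / d 0 i.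

Lemma y0_dot {R : realType} n (d : 'rV[R]_n) (v : 'cV[R]_n) :
  ((\col_i (v i 0 / d 0 i))^T *m v) 0 0 = cs d v.
Proof. rewrite mxE; apply: eq_bigr => i _; by rewrite !mxE expr2 mulrAC. Qed.

Lemma y0_quad {R : realType} n (d : 'rV[R]_n) (v : 'cV[R]_n) : (forall i, 0 < d 0 i) ->
  ((\col_i (v i 0 / d 0 i))^T *m diag_mx d *m (\col_i (v i 0 / d 0 i))) 0 0 = cs d v.
Proof.
move=> dp; rewrite diag_quad; apply: eq_bigr => i _; rewrite !mxE.
by field; rewrite gt_eqF.
Qed.

Lemma inv_diag_quad {R : realType} n (d : 'rV[R]_n) (v : 'cV[R]_n) : (forall i, 0 < d 0 i) ->
  (v^T *m invmx (diag_mx d) *m v) 0 0 = cs d v.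
Proof.
move=> dp.
have h : diag_mx d *m diag_mx (\row_i (d 0 i)^-1) = 1%:M.
  rewrite mulmx_diag -diag_const_mx; congr diag_mx; apply/matrixP => i j.
  by rewrite !mxE divff // gt_eqF.
have [uD _] := mulmx1_unit h.
have -> : invmx (diag_mx d) = diag_mx (\row_i (d 0 i)^-1).
  by rewrite -[invmx _]mulmx1 -h mulmxA mulVmx // mul1mx.
rewrite diag_quad; apply: eq_bigr => i _; by rewrite !mxE mulrAC -expr2.
Qed.

Lemma bound_i {R : realType} N K (d1 : 'rV[R]_N) (d2 : 'rV[R]_K) W (v : 'cV_N) :
  (forall i, 0 < d1 0 i) -> (forall k, 0 < d2 0 k) ->
  exists e, forall a b, 0 < a -> 0 < b ->
    (2 - a) * cs d1 v - b * e <= (v^T *m invmx (Mab d1 d2 W a b) *m v) 0 0 /\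
    (v^T *m invmx (Mab d1 d2 W a b) *m v) 0 0 <= a^-1 * cs d1 v.
Proof.
move=> p1 p2.
set y0 := \col_i (v i 0 / d1 0 i).
exists (((W^T *m y0)^T *m diag_mx d2 *m (W^T *m y0)) 0 0) => a b a0 b0.
have sM := @M_sym R N K d1 d2 W a b.
have pM := @M_psd R N K d1 d2 W a b p1 p2 (ltW a0) (ltW b0).
have uM := @M_unit R N K d1 d2 W a b p1 p2 a0 (ltW b0).
split.
  have := @qf_lower R N _ v y0 sM pM uM.
  rewrite M_quad y0_dot y0_quad //.
  move=> h; apply: le_trans h; rewrite mulrBl; lra.
rewrite (@qf_eq R N _ v uM) /= M_quad.
set x0 := invmx _ *m v.
have sb := @sq_bound R N d1 x0 v a p1 a0.
have h2 := @diag_ge0 R _ _ (W^T *m x0) p2.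
have h3 := mulr_ge0 (ltW b0) h2.
rewrite /cs; lra.
Qed.

Lemma bound_iib {R : realType} N K (d1 : 'rV[R]_N) (d2 : 'rV[R]_K) W (u : 'cV_K) :
  (forall i, 0 < d1 0 i) -> (forall k, 0 < d2 0 k) -> row_free W^T ->
  exists e, forall a b, 0 < a -> 0 < b ->
    (2 - b) * cs d2 u - a * e <= ((W *m u)^T *m invmx (Mab d1 d2 W a b) *m (W *m u)) 0 0 /\
    ((W *m u)^T *m invmx (Mab d1 d2 W a b) *m (W *m u)) 0 0 <= b^-1 * cs d2 u.
Proof.
move=> p1 p2 /row_freeP [B hB].
set y0 := \col_k (u k 0 / d2 0 k).
set x := B *m y0.
have WTx : W^T *m x = y0 by rewrite /x mulmxA hB mul1mx.
have xW : forall z : 'cV_N, z^T *m W = (W^T *m z)^T by move=> z; rewrite trmx_mul trmxK.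
exists ((x^T *m diag_mx d1 *m x) 0 0) => a b a0 b0.
have sM := @M_sym R N K d1 d2 W a b.
have pM := @M_psd R N K d1 d2 W a b p1 p2 (ltW a0) (ltW b0).
have uM := @M_unit R N K d1 d2 W a b p1 p2 a0 (ltW b0).
split.
  have := @qf_lower R N _ (W *m u) x sM pM uM.
  rewrite M_quad [x^T *m (W *m u)]mulmxA xW WTx y0_dot y0_quad //.
  move=> h; apply: le_trans h; rewrite mulrBl; lra.
rewrite (@qf_eq R N _ (W *m u) uM) /= M_quad.
set x0 := invmx _ *m (W *m u).
rewrite [x0^T *m (W *m u)]mulmxA xW.
have sb := @sq_bound R K d2 (W^T *m x0) u b p2 b0.
have h2 := @diag_ge0 R _ _ x0 p1.
have h3 := mulr_ge0 (ltW a0) h2.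
rewrite /cs; lra.
Qed.

Lemma bound_iia {R : realType} N K (d1 : 'rV[R]_N) (d2 : 'rV[R]_K) W (v : 'cV_N) :
  (forall i, 0 < d1 0 i) -> (forall k, 0 < d2 0 k) ->
  ~ (exists u : 'cV[R]_K, v = W *m u) ->
  exists k, 0 < k /\ forall a b, 0 < a -> 0 < b ->
    a^-1 * k <= (v^T *m invmx (Mab d1 d2 W a b) *m v) 0 0.
Proof.
move=> p1 p2 nspan.
set C := cokermx W^T.
have vC : v^T *m C != 0.
  apply/negP => /eqP h; apply: nspan.
  have : (v^T <= W^T)%MS by rewrite submxE h.
  case/submxP => D hD; exists D^T.
  by rewrite -[v]trmxK hD trmx_mul trmxK.
have [j hj] : exists j, (v^T *m C) 0 j != 0.
  apply/existsP; apply: contraR vC => /existsPn h.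
  by apply/eqP/matrixP => i k; rewrite (ord1 i) [RHS]mxE; have := h k; rewrite negbK => /eqP.
set x := col j C.
have WTx : W^T *m x = 0 by rewrite /x colE mulmxA mulmx_coker mul0mx.
set s := (x^T *m v) 0 0.
have s0 : s != 0 by rewrite /s tr11 /x colE mulmxA -colE mxE.
set t := (x^T *m diag_mx d1 *m x) 0 0.
have t0 : 0 < t.
  rewrite lt_neqAle diag_ge0 // andbT eq_sym; apply/negP => /eqP /diag_eq0 -/(_ p1) x0.
  by move: s0; rewrite /s x0 trmx0 mul0mx mxE eqxx.
exists (s ^+ 2 / t); split; first by rewrite divr_gt0 // lt_neqAle sqr_ge0 andbT eq_sym sqrf_eq0.
move=> a b a0 b0.
have sM := @M_sym R N K d1 d2 W a b.
have pM := @M_psd R N K d1 d2 W a b p1 p2 (ltW a0) (ltW b0).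
have uM := @M_unit R N K d1 d2 W a b p1 p2 a0 (ltW b0).
set c := s / (a * t).
have := @qf_lower R N _ v (c *: x) sM pM uM.
rewrite M_quad -[W^T *m (c *: x)]scalemxAr WTx scaler0 trmx0 !mul0mx.
rewrite linearZ /= -!scalemxAl -scalemxAr !e_scale -/s -/t.
have -> : (0 : 'M[R]_1) 0 0 = 0 by rewrite mxE.
suff -> : 2 * (c * s) - (a * (c * (c * t)) + b * 0) = a^-1 * (s ^+ 2 / t) by [].
rewrite /c; field.
by rewrite (gt_eqF a0) (gt_eqF t0).
Qed.

Lemma fst_cvg (R : realType) (a b : R) : (fun p : R * R => p.1) @ nbhs (a, b) --> a.
Proof. exact: cvg_fst. Qed.
Lemma snd_cvg (R : realType) (a b : R) : (fun p : R * R => p.2) @ nbhs (a, b) --> b.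
Proof. exact: cvg_snd. Qed.

Lemma fst_near (R : realType) (d : R) : 0 < d -> \forall p \near nbhs ((0:R),(1:R)), p.1 < d.
Proof. move=> d0; exact: (cvgr_lt 0 (@fst_cvg R 0 1) _ d0). Qed.

Lemma lowcvg {R : realType} {T} (F : set_system T) {FF : Filter F} (f g : T -> R) (c e a b : R) :
  f @ F --> a -> g @ F --> b ->
  (fun p => 2^-1 * ((2 - f p) * c - g p * e)) @ F --> 2^-1 * ((2 - a) * c - b * e).
Proof.
move=> fa gb.
apply: cvgMr; apply: cvgB; apply: cvgMl; last exact: gb.
by apply: cvgB; [exact: cvg_cst| exact: fa].
Qed.

Lemma upcvg {R : realType} {T} (F : set_system T) {FF : Filter F} (f : T -> R) (c a : R) :
  a != 0 -> f @ F --> a ->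
  (fun p => 2^-1 * ((f p)^-1 * c)) @ F --> 2^-1 * (a^-1 * c).
Proof.
move=> a0 fa.
apply: cvgMr; apply: cvgMl. have := cvgV a0 fa. rewrite /unstable.inv_fun. exact.
Qed.

Theorem proposition2 (R : realType) (N K : nat)
  (psi_id : 'rV[R]_N) (psi_f : 'rV[R]_K) (W : 'M[R]_(N, K)) :
  (forall i, 0 < psi_id 0 i) ->
  (forall k, 0 < psi_f 0 k) ->
  row_free W^T ->
  (* (i) *)
  (forall v : 'cV[R]_N,
     ((fun p : R * R => Cbar psi_id psi_f W p.1 p.2 v)
        @ within (@param_dom R) (nbhs ((1 : R), (0 : R)))
        --> 2^-1 * (v^T *m invmx (diag_mx psi_id) *m v) 0 0)
     /\ 2^-1 * (v^T *m invmx (diag_mx psi_id) *m v) 0 0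
        = 2^-1 * \sum_(i < N) (v i 0 ^+ 2 / psi_id 0 i)) /\
  (* (ii) *)
  (forall v : 'cV[R]_N,
     ~ (exists u : 'cV[R]_K, v = W *m u) ->
     (fun p : R * R => Cbar psi_id psi_f W p.1 p.2 v)
        @ within (@param_dom R) (nbhs ((0 : R), (1 : R))) --> +oo) /\
  (forall (u : 'cV[R]_K) (v : 'cV[R]_N), v = W *m u ->
     (fun p : R * R => Cbar psi_id psi_f W p.1 p.2 v)
        @ within (@param_dom R) (nbhs ((0 : R), (1 : R)))
        --> 2^-1 * (u^T *m invmx (diag_mx psi_f) *m u) 0 0).
Proof.
move=> p1 p2 rf.
have CE : forall a b v, Cbar psi_id psi_f W a b v
    = 2^-1 * (v^T *m invmx (Mab psi_id psi_f W a b) *m v) 0 0 by [].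
split; [|split].
- move=> v; rewrite inv_diag_quad //; split; last by [].
  have [e He] := @bound_i R N K psi_id psi_f W v p1 p2.
  apply: (@squeeze_cvgr _ _ _ R (fun p => 2^-1 * ((2 - p.1) * cs psi_id v - p.2 * e))
      (fun p => 2^-1 * (p.1^-1 * cs psi_id v))).
  + rewrite near_withinE; apply: filterE => p [/andP[a0 _] /andP[b0 _]].
    rewrite CE; have [l u] := He _ _ a0 b0.
    by apply/andP; split; rewrite ler_pM2l ?invr_gt0.
  + apply: cvg_within_filter.
    suff -> : 2^-1 * cs psi_id v = 2^-1 * ((2 - 1) * cs psi_id v - 0 * e).
      by apply: lowcvg; [exact: fst_cvg | exact: snd_cvg].
    by congr (_ * _); ring.
  + apply: cvg_within_filter.
    suff -> : 2^-1 * cs psi_id v = 2^-1 * (1^-1 * cs psi_id v) by apply: upcvg; [exact: oner_neq0 | exact: fst_cvg].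
    by rewrite invr1 mul1r.
- move=> v nsp.
  have [k [k0 Hk]] := @bound_iia R N K psi_id psi_f W v p1 p2 nsp.
  apply/cvgryPge => A.
  have d0 : 0 < 2^-1 * k / (`|A| + 1).
    by rewrite divr_gt0 ?mulr_gt0 ?invr_gt0 // ltr_pwDr // normr_ge0.
  have H1 := @fst_near R _ d0.
  rewrite near_withinE; apply: filterS H1 => p h1 [/andP[a0 _] /andP[b0 _]].
  rewrite CE; have hq := Hk _ _ a0 b0.
  apply: le_trans (_ : A <= 2^-1 * (p.1^-1 * k)) _; last by rewrite ler_pM2l ?invr_gt0.
  have Ap : 0 < `|A| + 1 by rewrite ltr_pwDr // normr_ge0.
  move: h1; rewrite ltr_pdivlMr // => h1.
  have -> : 2^-1 * (p.1^-1 * k) = (2^-1 * k) / p.1 by rewrite mulrCA mulrC.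
  rewrite ltW // (le_lt_trans (ler_norm A)) //.
  rewrite ltr_pdivlMr //; apply: le_lt_trans h1.
  by rewrite mulrC ler_pM2l // lerDl.
- move=> u v ->; rewrite inv_diag_quad //.
  have [e He] := @bound_iib R N K psi_id psi_f W u p1 p2 rf.
  apply: (@squeeze_cvgr _ _ _ R (fun p => 2^-1 * ((2 - p.2) * cs psi_f u - p.1 * e))
      (fun p => 2^-1 * (p.2^-1 * cs psi_f u))).
  + rewrite near_withinE; apply: filterE => p [/andP[a0 _] /andP[b0 _]].
    rewrite CE; have [l r] := He _ _ a0 b0.
    by apply/andP; split; rewrite ler_pM2l ?invr_gt0.
  + apply: cvg_within_filter.
    suff -> : 2^-1 * cs psi_f u = 2^-1 * ((2 - 1) * cs psi_f u - 0 * e).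
      by apply: lowcvg; [exact: snd_cvg | exact: fst_cvg].
    by congr (_ * _); ring.
  + apply: cvg_within_filter.
    suff -> : 2^-1 * cs psi_f u = 2^-1 * (1^-1 * cs psi_f u) by apply: upcvg; [exact: oner_neq0 | exact: snd_cvg].
    by rewrite invr1 mul1r.
Qed.
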